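(* Let $\mathrm{M}=\langle e_1+I,\ e_2+I,\ A\rangle$, where $e_1,e_2$ are the standard basis vectors of $E^2$ and $A=\begin{pmatrix}0&1\\1&0\end{pmatrix}$ is the linear map transposing $e_1$ and $e_2$. Then $$N_A(\mathrm{M})=\{b+B : b_1-b_2\in\mathbb Z \text{ and } B\in\langle -I, A\rangle\},$$ where $b=(b_1,b_2)$.
   Context: Affine maps of $E^2$ are written $b+B$ (meaning $x\mapsto b+Bx$, $b\in E^2$, $B\in\mathrm{GL}(2,\mathbb R)$); $b+I$ is translation by $b$. $N_A(\mathrm{M})$ denotes the normalizer of $\mathrm{M}$ in the group of affine transformations of $E^2$. (Here $\mathrm{M}$ is a 2-space group of type $\ast\times$, i.e. $cm$, and $E^2/\mathrm{M}$ is a Möbius band.) *)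

(* Defs.v *)
From HB Require Import structures.
From mathcomp Require Import all_boot all_order all_algebra.
From mathcomp Require Import reals.
Set Implicit Arguments. Unset Strict Implicit. Unset Printing Implicit Defensive.
Import Order.TTheory GRing.Theory Num.Theory.
Local Open Scope ring_scope.

Inductive gen (T : Type) (mul : T -> T -> T) (inv : T -> T) (one : T)
    (S : T -> Prop) : T -> Prop :=
  | gen_base x : S x -> gen mul inv one S x
  | gen_one : gen mul inv one S one
  | gen_mul x y : gen mul inv one S x -> gen mul inv one S y ->
                  gen mul inv one S (mul x y)
  | gen_inv x : gen mul inv one S x -> gen mul inv one S (inv x).

(* Affine map b + B of E^2 : x |-> b + B x (column vectors). *)
Definition aff (R : realType) := ('cV[R]_2 * 'M[R]_2)%type.

Definition aff_apply (R : realType) (g : aff R) (x : 'cV[R]_2) : 'cV[R]_2 :=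
  g.1 + g.2 *m x.
Definition aff_mul (R : realType) (g h : aff R) : aff R :=
  (g.1 + g.2 *m h.1, g.2 *m h.2).
Definition aff_inv (R : realType) (g : aff R) : aff R :=
  (- (invmx g.2 *m g.1), invmx g.2).
Definition aff_id (R : realType) : aff R := (0, 1%:M).
Definition is_affine (R : realType) (g : aff R) : Prop := g.2 \in unitmx.

(* Group generated by a set of affine maps (all generators assumed invertible). *)
Definition aff_gen (R : realType) (S : aff R -> Prop) :=
  gen (@aff_mul R) (@aff_inv R) (@aff_id R) S.
Definition mx_gen (R : realType) (S : 'M[R]_2 -> Prop) :=
  gen (@mulmx R 2 2 2) (@invmx R 2) 1%:M S.

Definition normalizer_A (R : realType) (M : aff R -> Prop) (g : aff R) : Prop :=
  is_affine g /\
  forall h, M h <-> M (aff_mul (aff_mul g h) (aff_inv g)).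

Definition e1 (R : realType) : 'cV[R]_2 := delta_mx 0 0.
Definition e2 (R : realType) : 'cV[R]_2 := delta_mx 1 0.
Definition transl (R : realType) (b : 'cV[R]_2) : aff R := (b, 1%:M).
Definition Aswap (R : realType) : 'M[R]_2 :=
  \matrix_(i < 2, j < 2) (if i == j then 0 else 1).

Definition Mcm (R : realType) : aff R -> Prop :=
  aff_gen (fun g => g = transl (e1 R) \/ g = transl (e2 R) \/ g = (0, Aswap R)).

(* Main.v *)
Require Import Defs.
From HB Require Import structures.
From mathcomp Require Import all_boot all_order all_algebra.
From mathcomp Require Import reals ring lra.
Import Order.TTheory GRing.Theory Num.Theory.
Local Open Scope ring_scope.

Section S.
Set Implicit Arguments. Unset Strict Implicit.
Variable R : realType.
Local Notation A := (Aswap R).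

Lemma ord2 (i : 'I_2) : i = 0 \/ i = 1.
Proof. case: i => [[|[|//]] Hi]; [left|right]; exact/val_inj. Qed.

Lemma mulE n (B : 'M[R]_2) (C : 'M[R]_(2,n)) i j :
  (B *m C) i j = B i 0 * C 0 j + B i 1 * C 1 j.
Proof.
rewrite !mxE !big_ord_recl big_ord0 addr0.
by congr (B i _ * C _ j + B i _ * C _ j); apply/val_inj.
Qed.

Ltac mxsolve := apply/matrixP; let i := fresh "i" in let j := fresh "j" in
  move=> i j; case: (ord2 i) => ->; case: (ord2 j) => ->; rewrite ?mulE !mxE /=.

Lemma A2 : A *m A = 1%:M.
Proof. by mxsolve; lra. Qed.

Definition intv (v : 'cV[R]_2) := (v 0 0 \is a Num.int) && (v 1 0 \is a Num.int).
Definition P (h : aff R) := intv h.1 /\ (h.2 = 1%:M \/ h.2 = A).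
Definition Q (B : 'M[R]_2) := [\/ B = 1%:M, B = -1%:M, B = A | B = - A].

Lemma QBB B : Q B -> B *m B = 1%:M.
Proof. by case=> ->; rewrite ?(mul1mx, mulmx1, mulNmx, mulmxN, opprK, A2). Qed.

Lemma QBA B : Q B -> B *m A = A *m B.
Proof. by case=> ->; rewrite ?(mul1mx, mulmx1, mulNmx, mulmxN). Qed.

Lemma Qunit B : Q B -> B \in unitmx.
Proof. by move/QBB/mulmx1_unit=> []. Qed.

Lemma Qinv B : Q B -> invmx B = B.
Proof.
move=> QB; have U := Qunit QB.
by rewrite -{2}[B]mul1mx -(mulVmx U) -mulmxA (QBB QB) mulmx1.
Qed.

Lemma Qmul B C : Q B -> Q C -> Q (B *m C).
Proof.
case=> ->; case=> ->; rewrite ?(mul1mx, mulmx1, mulNmx, mulmxN, opprK, A2);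
  by [apply: Or41|apply: Or42|apply: Or43|apply: Or44].
Qed.

Lemma Av0 (v : 'cV[R]_2) : (A *m v) 0 0 = v 1 0.
Proof. rewrite mulE !mxE /=; lra. Qed.
Lemma Av1 (v : 'cV[R]_2) : (A *m v) 1 0 = v 0 0.
Proof. rewrite mulE !mxE /=; lra. Qed.

Lemma intvN v : intv (- v) = intv v.
Proof. by rewrite /intv !mxE !rpredN. Qed.

Lemma intvD v w : intv v -> intv w -> intv (v + w).
Proof.
rewrite /intv !mxE => /andP[? ?] /andP[? ?]; apply/andP; split; exact: rpredD.
Qed.

Lemma intvB v w : intv v -> intv w -> intv (v - w).
Proof. by move=> ? ?; apply: intvD; rewrite ?intvN. Qed.

Lemma Qint B v : Q B -> intv (B *m v) = intv v.
Proof.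
by case=> ->; rewrite ?(mul1mx, mulNmx) ?intvN // /intv Av0 Av1 andbC.
Qed.

Lemma Mcm_P h : Mcm h -> P h.
Proof.
elim=> [x [->|[->|->]] | | x y _ [Ix Cx] _ [Iy Cy] | x _ [Ix Cx]].
- split; last by left.
  by rewrite /intv /e1 /= !mxE /= ?rpred0 ?rpred1 ?natr_int.
- split; last by left.
  by rewrite /intv /e2 /= !mxE /= ?rpred0 ?rpred1 ?natr_int.
- split; last by right.
  by rewrite /intv /= !mxE ?rpred0.
- split; last by left.
  by rewrite /intv /= !mxE ?rpred0.
- have QX : Q x.2 by case: Cx => ->; [apply: Or41|apply: Or43].
  split; first by apply: intvD => //; rewrite Qint.
  rewrite /=; case: Cx => ->; case: Cy => ->; rewrite ?(mul1mx, mulmx1, A2);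
    by [left|right].
- have QX : Q x.2 by case: Cx => ->; [apply: Or41|apply: Or43].
  split; first by rewrite /= intvN (Qinv QX) Qint.
  by rewrite /= (Qinv QX).
Qed.

Lemma transl_mul (a c : 'cV[R]_2) : aff_mul (transl a) (transl c) = transl (a + c).
Proof. by rewrite /aff_mul /transl /= mul1mx mulmx1. Qed.

Lemma transl_inv (a : 'cV[R]_2) : aff_inv (transl a) = transl (- a).
Proof. by rewrite /aff_inv /transl /= invmx1 mul1mx. Qed.

Lemma transl_nat (e : 'cV[R]_2) n : Mcm (transl e) -> Mcm (transl (n%:R *: e)).
Proof.
move=> He; elim: n => [|n IH].
  rewrite scale0r; exact: gen_one.
rewrite mulrSr scalerDl scale1r -transl_mul; exact: gen_mul.
Qed.

Lemma transl_int (e : 'cV[R]_2) (z : int) : Mcm (transl e) -> Mcm (transl (z%:~R *: e)).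
Proof.
move=> He; case: z => n.
  exact: transl_nat.
rewrite NegzE intrN scaleNr -transl_inv; apply: gen_inv.
exact: transl_nat.
Qed.

Lemma P_Mcm h : P h -> Mcm h.
Proof.
case: h => v C [/= /andP[/intrP[m Hm] /intrP[n Hn]] HC].
have Ev : v = m%:~R *: e1 R + n%:~R *: e2 R.
  apply/matrixP => i j.
  have -> : j = 0 by case: j => [[|//] Hj]; apply/val_inj.
  by case: (ord2 i) => ->; rewrite !mxE /= ?Hm ?Hn; lra.
have Mv : Mcm (transl v).
  rewrite Ev -transl_mul; apply: gen_mul; apply: transl_int; apply: gen_base;
   [left|right; left]; done.
case: HC => ->; first exact: Mv.
have -> : (v, A) = aff_mul (transl v) (0, A).
  by rewrite /aff_mul /transl /= mulmx0 addr0 mul1mx.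
apply: gen_mul => //; apply: gen_base; right; right; done.
Qed.

Lemma Mcm_iff h : Mcm h <-> P h.
Proof. split; [exact: Mcm_P | exact: P_Mcm]. Qed.

Lemma unit_int (x y : R) : x \is a Num.int -> y \is a Num.int -> x * y = 1 ->
  x = 1 \/ x = -1.
Proof.
move=> /intrP[m ->] /intrP[n ->]; rewrite -intrM => /eqP.
rewrite -[X in _ == X](mulr1z (1 : R)) eqr_int => /eqP.
rewrite mulrC => /intUnitRing.unitzPl; rewrite unfold_in /=.
by case/orP => /eqP ->; [left|right]; rewrite ?intrN.
Qed.

Lemma subE (v w : 'cV[R]_2) i j : (v - w) i j = v i j - w i j.
Proof. by rewrite !mxE. Qed.

Lemma Me1 (M : 'M[R]_2) i : (M *m e1 R) i 0 = M i 0.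
Proof. by case: (ord2 i) => ->; rewrite mulE !mxE /=; lra. Qed.

End S.

Ltac mxsolve2 := apply/matrixP; let i := fresh "i" in let j := fresh "j" in
  move=> i j; case: (ord2 i) => ->; case: (ord2 j) => ->; rewrite ?mulE !mxE /=.

Theorem lemma13 (R : realType) (b : 'cV[R]_2) (B : 'M[R]_2) :
  normalizer_A (@Mcm R) (b, B) <->
  ((exists z : int, b 0 0 - b 1 0 = z%:~R) /\
   mx_gen (fun C => C = - 1%:M \/ C = @Aswap R) B).
Proof.
have QMX : forall C : 'M[R]_2,
    mx_gen (fun C => C = - 1%:M \/ C = Aswap R) C -> Q C.
  move=> C; elim=> [x [->|->] | | x y _ Qx _ Qy | x _ Qx].
  - exact: Or42.
  - exact: Or43.
  - exact: Or41.
  - exact: Qmul.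
  - by rewrite Qinv.
rewrite /normalizer_A /is_affine /=.
have conjE : forall h : aff R, aff_mul (aff_mul (b, B) h) (aff_inv (b, B)) =
   (b + B *m h.1 - B *m h.2 *m invmx B *m b, B *m h.2 *m invmx B).
  by move=> h; rewrite /aff_mul /aff_inv /= mulmxN !mulmxA.
split.
- case=> U H.
  have P1 : P (B *m e1 R, 1%:M).
    apply/Mcm_P; have := H (transl (e1 R)); rewrite conjE /transl /=.
    rewrite mulmx1 (mulmxV U) mul1mx.
    have -> : b + B *m e1 R - b = B *m e1 R by rewrite addrAC subrr add0r.
    move=> [+ _]; apply; apply: gen_base; left; done.
  have P2 : P (invmx B *m e1 R, 1%:M).
    apply/Mcm_P; apply/(H (invmx B *m e1 R, 1%:M)); rewrite conjE /=.
    rewrite !mulmx1 !mulmxA (mulmxV U) !mul1mx.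
    have -> : b + e1 R - b = e1 R by rewrite addrAC subrr add0r.
    apply: gen_base; left; done.
  have P3 : P (b + B *m 0 - B *m (Aswap R) *m invmx B *m b, B *m (Aswap R) *m invmx B).
    apply/Mcm_P; have [Hf _] := H (0, Aswap R); rewrite conjE /= in Hf.
    by apply: Hf; apply: gen_base; right; right.
  case: P3 => /= I3 C3.
  case: C3 => C3.
    have EA : (Aswap R) = invmx B *m (B *m (Aswap R) *m invmx B) *m B.
      by rewrite !mulmxA (mulVmx U) mul1mx -mulmxA (mulVmx U) mulmx1.
    rewrite C3 mulmx1 (mulVmx U) in EA.
    by move/matrixP: EA => /(_ 0 0); rewrite !mxE /=; lra.
  have BA : B *m (Aswap R) = (Aswap R) *m B by rewrite -{2}C3 -!mulmxA (mulVmx U) mulmx1.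
  rewrite C3 mulmx0 addr0 in I3.
  split.
    move: I3 => /andP[+ _]; rewrite subE Av0 => /intrP[z Hz]; by exists z.
  have E00 : (B *m Aswap R) 0 0 = (Aswap R *m B) 0 0 by rewrite BA.
  have E01 : (B *m Aswap R) 0 1 = (Aswap R *m B) 0 1 by rewrite BA.
  rewrite /= !mulE !mxE /= in E00 E01.
  have V00 : (B *m invmx B) 0 0 = (1%:M : 'M[R]_2) 0 0 by rewrite mulmxV.
  have V10 : (B *m invmx B) 1 0 = (1%:M : 'M[R]_2) 1 0 by rewrite mulmxV.
  rewrite /= !mulE !mxE /= in V00 V10.
  case: P1 => /andP[]; rewrite !Me1 => Ip Iq _.
  case: P2 => /andP[]; rewrite !Me1 => Ir It _.
  have HS : B 0 0 + B 1 0 = 1 \/ B 0 0 + B 1 0 = -1.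
    apply: (@unit_int _ _ (invmx B 0 0 + invmx B 1 0));
      [exact: rpredD | exact: rpredD | nra].
  have HD : B 0 0 - B 1 0 = 1 \/ B 0 0 - B 1 0 = -1.
    apply: (@unit_int _ _ (invmx B 0 0 - invmx B 1 0));
      [exact: rpredB | exact: rpredB | nra].
  case: HS => S1; case: HD => D1.
  + have -> : B = 1%:M by mxsolve2; lra.
    exact: gen_one.
  + have -> : B = (Aswap R) by mxsolve2; lra.
    by apply: gen_base; right.
  + have -> : B = - 1%:M *m (Aswap R) by mxsolve2; lra.
    by apply: gen_mul; apply: gen_base; [left|right].
  + have -> : B = - 1%:M by mxsolve2; lra.
    by apply: gen_base; left.
- case=> [[z Hz] HB]; have QB := QMX _ HB.
  split; first exact: Qunit.
  case=> v C; rewrite conjE (Qinv QB) /= !Mcm_iff /P /=.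
  have Ib : intv (b - (Aswap R) *m b).
    rewrite /intv !subE Av0 Av1 Hz -[b 1 0 - b 0 0]opprB Hz rpredN intr_int //.
  have BAB : B *m (Aswap R) *m B = (Aswap R) by rewrite (QBA QB) -mulmxA (QBB QB) mulmx1.
  have B1B : B *m 1%:M *m B = 1%:M by rewrite mulmx1 (QBB QB).
  split.
  + case=> Iv [->|->].
    * rewrite B1B mul1mx addrAC subrr add0r Qint //; split=> //; by left.
    * rewrite BAB; split; last by right.
      have -> : b + B *m v - (Aswap R) *m b = (b - (Aswap R) *m b) + B *m v by rewrite addrAC.
      by apply: intvD => //; rewrite Qint.
  + case=> Iv HC.
    have EC : C = B *m (B *m C *m B) *m B.
      by rewrite !mulmxA (QBB QB) mul1mx -mulmxA (QBB QB) mulmx1.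
    case: HC => HC.
    * have EC1 : C = 1%:M by rewrite EC HC mulmx1 (QBB QB).
      subst C.
      rewrite B1B mul1mx addrAC subrr add0r (Qint _ QB) in Iv.
      by split=> //; left.
    * have EC1 : C = Aswap R by rewrite EC HC BAB.
      subst C; rewrite BAB in Iv.
      split; last by right.
      rewrite -(Qint v QB).
      have -> : B *m v = (b + B *m v - (Aswap R) *m b) - (b - (Aswap R) *m b).
        by apply/matrixP=> i j; rewrite !mxE; lra.
      exact: intvB.
Qed.
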